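(* Each of the matroids $U_{2,5}$, $U_{3,5}$, $K$ and $K^*$ is an excluded minor for the class $\mathcal{R}$.
   Context: $\mathcal{R}$ is the class of matroids that are binary or can be obtained from a binary matroid by relaxing a circuit-hyperplane (relaxing a circuit-hyperplane $H$ of $M$ means forming the matroid on $E(M)$ whose bases are the bases of $M$ together with $H$). $K$ is the seven-element rank-2 matroid obtained from $U_{2,4}$ by adding one new element in parallel to each of three of its four elements; $K^*$ is its dual. An excluded minor for a minor-closed class is a matroid not in the class all of whose proper minors are in the class. *)

(* Defs.v *)
From HB Require Import structures.
From mathcomp Require Import all_boot all_order all_algebra.
Set Implicit Arguments. Unset Strict Implicit. Unset Printing Implicit Defensive.
Import GRing.Theory.

Record matroid (T : finType) := Matroid {
  ground : {set T};
  bases  : {set {set T}} }.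

Definition is_matroid (T : finType) (M : matroid T) : Prop :=
  [/\ (forall B, B \in bases M -> B \subset ground M),
      bases M != set0 &
      (forall B1 B2 x, B1 \in bases M -> B2 \in bases M -> x \in B1 :\: B2 ->
         exists2 y, y \in B2 :\: B1 & (B1 :\ x) :|: [set y] \in bases M)].

Definition indep (T : finType) (M : matroid T) (I : {set T}) : bool :=
  [exists B in bases M, I \subset B].

Definition rank (T : finType) (M : matroid T) (A : {set T}) : nat :=
  \max_(I : {set T} | (I \subset A) && indep M I) #|I|.

(* the minor M / C \ D (C contracted, D deleted); ground set E - (C u D);
   independent sets: I with r(I u C) = |I| + r(C); bases = maximal ones *)
Definition minor (T : finType) (M : matroid T) (C D : {set T}) : matroid T :=
  let E' := ground M :\: (C :|: D) in
  Matroid E'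
    [set I | maxset (fun I : {set T} =>
                (I \subset E') && (rank M (I :|: C) == #|I| + rank M C)) I].

Definition dual (T : finType) (M : matroid T) : matroid T :=
  Matroid (ground M) [set ground M :\: B | B in bases M].

(* binary = representable over GF(2): vectors v e, bases = subsets of E whose
   vectors are linearly independent and span the span of all of E *)
Definition span_rank (T : finType) n (v : T -> 'rV['F_2]_n) (S : {set T}) : nat :=
  \rank (\sum_(e in S) <<v e>>)%MS.

Definition binary (T : finType) (M : matroid T) : Prop :=
  exists n (v : T -> 'rV['F_2]_n),
    bases M = [set B : {set T} | (B \subset ground M) && (span_rank v B == #|B|)
                        && (span_rank v B == span_rank v (ground M))].

Definition is_circuit (T : finType) (M : matroid T) (X : {set T}) : bool :=
  minset (fun Y : {set T} => (Y \subset ground M) && ~~ indep M Y) X.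

Definition is_flat (T : finType) (M : matroid T) (X : {set T}) : bool :=
  (X \subset ground M) &&
  [forall e in ground M :\: X, rank M X < rank M (e |: X)].

Definition is_hyperplane (T : finType) (M : matroid T) (X : {set T}) : bool :=
  is_flat M X && (rank M X + 1 == rank M (ground M)).

Definition relax (T : finType) (M : matroid T) (H : {set T}) : matroid T :=
  Matroid (ground M) (H |: bases M).

Definition in_R (T : finType) (M : matroid T) : Prop :=
  binary M \/
  exists (N : matroid T) (H : {set T}),
    [/\ binary N, is_circuit N H, is_hyperplane N H & M = relax N H].

Definition excluded_minor_R (T : finType) (M : matroid T) : Prop :=
  [/\ is_matroid M, ~ in_R M &
      forall C D : {set T}, C :|: D \subset ground M -> [disjoint C & D] ->
        C :|: D != set0 -> in_R (minor M C D)].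

Definition U25 : matroid 'I_5 := Matroid setT [set B : {set 'I_5} | #|B| == 2].
Definition U35 : matroid 'I_5 := Matroid setT [set B : {set 'I_5} | #|B| == 3].

(* K: elements 0,1,2,3 form U_{2,4}; 4,5,6 are parallel to 0,1,2 *)
Definition K : matroid 'I_7 :=
  Matroid setT [set B : {set 'I_7} | (#|B| == 2) &&
    [forall x in B, forall y in B, (x != y) ==> (val x %% 4 != val y %% 4)]].

Definition Kstar : matroid 'I_7 := dual K.

(* Main.v *)
Require Import Defs.
From HB Require Import structures.
From mathcomp Require Import all_boot all_order all_algebra.
Set Implicit Arguments. Unset Strict Implicit. Unset Printing Implicit Defensive.

Import GRing.Theory.

Fixpoint orl (s t : seq bool) : seq bool :=
  match s, t with a :: s', b :: t' => (a || b) :: orl s' t' | _, _ => [::] end.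
Fixpoint andl (s t : seq bool) : seq bool :=
  match s, t with a :: s', b :: t' => (a && b) :: andl s' t' | _, _ => [::] end.
Fixpoint xorl (s t : seq bool) : seq bool :=
  match s, t with a :: s', b :: t' => (addb a b) :: xorl s' t' | _, _ => [::] end.
Definition negl (s : seq bool) := map negb s.
Fixpoint subl (s t : seq bool) : bool :=
  match s, t with a :: s', b :: t' => (a ==> b) && subl s' t' | _, _ => true end.
Definition unitl (n i : nat) : seq bool := mkseq (fun j => j == i) n.
Fixpoint allseqs (k : nat) : seq (seq bool) :=
  if k is k'.+1 then [seq false :: s | s <- allseqs k'] ++ [seq true :: s | s <- allseqs k']
  else [:: [::]].

Lemma size_orl s t : size s = size t -> size (orl s t) = size s.
Proof. by elim: s t => [|a s IH] [|b t] //= [/IH ->]. Qed.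
Lemma size_andl s t : size s = size t -> size (andl s t) = size s.
Proof. by elim: s t => [|a s IH] [|b t] //= [/IH ->]. Qed.
Lemma size_xorl s t : size s = size t -> size (xorl s t) = size s.
Proof. by elim: s t => [|a s IH] [|b t] //= [/IH ->]. Qed.
Lemma size_negl s : size (negl s) = size s. Proof. by rewrite size_map. Qed.
Lemma nth_orl s t i : size s = size t -> nth false (orl s t) i = nth false s i || nth false t i.
Proof. elim: s t i => [|a s IH] [|b t] [|i] //= [e]; exact: IH. Qed.
Lemma nth_andl s t i : size s = size t -> nth false (andl s t) i = nth false s i && nth false t i.
Proof. elim: s t i => [|a s IH] [|b t] [|i] //= [e]; exact: IH. Qed.
Lemma nth_xorl s t i : size s = size t -> nth false (xorl s t) i = addb (nth false s i) (nth false t i).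
Proof. elim: s t i => [|a s IH] [|b t] [|i] //= [e]; exact: IH. Qed.
Lemma nth_negl s i : i < size s -> nth false (negl s) i = ~~ nth false s i.
Proof. by move=> lt; rewrite (nth_map false). Qed.
Lemma sublP s t : size s = size t ->
  reflect (forall i, nth false s i -> nth false t i) (subl s t).
Proof.
elim: s t => [|a s IH] [|b t] //= => [_|[e]]; first by apply: ReflectT => i; rewrite nth_nil.
apply: (iffP andP) => [[ab /(IH _ e) st] [|i] //= | H]; first by move/implyP: ab.
  by apply: st.
split; first by apply/implyP => /(H 0).
by apply/(IH _ e) => i /(H i.+1).
Qed.
Lemma size_unitl n i : size (unitl n i) = n. Proof. by rewrite size_mkseq. Qed.
Lemma nth_unitl n i j : nth false (unitl n i) j = (j < n) && (j == i).
Proof.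
case: (ltnP j n) => lt; first by rewrite nth_mkseq.
by rewrite nth_default // size_unitl.
Qed.
Lemma mem_allseqs k s : (s \in allseqs k) = (size s == k).
Proof.
elim: k s => [|k IH] [|b s] //=.
- by rewrite mem_cat; apply/negbTE; rewrite negb_or; apply/andP; split; apply/mapP => -[].
- rewrite mem_cat eqSS -IH; apply/orP/idP.
  + by case => /mapP [x xin [_ ->]].
  + by case: b => sin; [right|left]; apply: map_f.
Qed.
Lemma foldr_max_ge (l : seq nat) x : x \in l -> x <= foldr maxn 0 l.
Proof.
elim: l => [|a l IH] //=; rewrite inE => /orP[/eqP -> | /IH h]; first by rewrite leq_maxl.
by rewrite (leq_trans h) // leq_maxr.
Qed.
Lemma foldr_max_le (l : seq nat) m : (forall x, x \in l -> x <= m) -> foldr maxn 0 l <= m.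
Proof.
elim: l => [|a l IH] //= H; rewrite geq_max H ?mem_head // IH // => x xin.
by rewrite H // inE xin orbT.
Qed.

Section Masks.
Variable k : nat.
Local Notation n := k.+1.

Definition setof (s : seq bool) : {set 'I_n} := [set i : 'I_n | nth false s i].
Definition msk (A : {set 'I_n}) : seq bool := [seq i \in A | i <- enum 'I_n].

Lemma size_msk A : size (msk A) = n.
Proof. by rewrite size_map size_enum_ord. Qed.
Lemma nth_msk A (i : 'I_n) : nth false (msk A) i = (i \in A).
Proof. by rewrite (nth_map i) ?size_enum_ord // nth_ord_enum. Qed.
Lemma setofK A : setof (msk A) = A.
Proof. by apply/setP => i; rewrite inE nth_msk. Qed.
Lemma msk_ext (A : {set 'I_n}) s : size s = n -> (forall i : 'I_n, nth false s i = (i \in A)) -> msk A = s.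
Proof.
move=> sz H; apply: (eq_from_nth (x0:=false)); first by rewrite size_msk.
move=> i; rewrite size_msk => lt.
have := nth_msk A (Ordinal lt); have := H (Ordinal lt); rewrite /= => -> -> //.
Qed.
Lemma mskK s : size s = n -> msk (setof s) = s.
Proof. by move=> sz; apply: msk_ext => // i; rewrite inE. Qed.
Lemma msk_inj : injective msk.
Proof. by move=> A B e; rewrite -(setofK A) e setofK. Qed.
Lemma eq_msk A B : (A == B) = (msk A == msk B).
Proof. by apply/eqP/eqP => [->|/msk_inj]. Qed.
Lemma msk_in_all A : msk A \in allseqs n.
Proof. by rewrite mem_allseqs size_msk. Qed.

Lemma msk_setU A B : msk (A :|: B) = orl (msk A) (msk B).
Proof.
by apply: msk_ext => [|i]; rewrite ?size_orl ?size_msk // nth_orl ?size_msk // !nth_msk inE.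
Qed.
Lemma msk_setI A B : msk (A :&: B) = andl (msk A) (msk B).
Proof.
by apply: msk_ext => [|i]; rewrite ?size_andl ?size_msk // nth_andl ?size_msk // !nth_msk inE.
Qed.
Lemma msk_setC A : msk (~: A) = negl (msk A).
Proof.
apply: msk_ext => [|i]; rewrite ?size_negl ?size_msk //.
by rewrite nth_negl ?size_msk // !nth_msk inE.
Qed.
Lemma msk_setD A B : msk (A :\: B) = andl (msk A) (negl (msk B)).
Proof. by rewrite setDE msk_setI msk_setC. Qed.
Lemma msk_set1 (x : 'I_n) : msk [set x] = unitl n x.
Proof. by apply: msk_ext => [|i]; rewrite ?size_unitl // nth_unitl inE ltn_ord. Qed.
Lemma msk_setT : msk setT = nseq n true.
Proof. by apply: msk_ext => [|i]; rewrite ?size_nseq // nth_nseq ltn_ord inE. Qed.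
Lemma msk_set0 : msk set0 = nseq n false.
Proof. by apply: msk_ext => [|i]; rewrite ?size_nseq // nth_nseq ltn_ord inE. Qed.
Lemma card_msk (A : {set 'I_n}) : #|A| = count id (msk A).
Proof. by rewrite count_map enumT -size_filter cardE /enum_mem. Qed.
Lemma subset_msk (A B : {set 'I_n}) : (A \subset B) = subl (msk A) (msk B).
Proof.
have e : size (msk A) = size (msk B) by rewrite !size_msk.
apply/subsetP/(sublP e) => [H i | H x].
  case: (ltnP i n) => lt; last by rewrite nth_default ?size_msk.
  have := nth_msk A (Ordinal lt); have := nth_msk B (Ordinal lt); rewrite /= => -> ->.
  by apply: H.
by rewrite -!nth_msk; apply: H.
Qed.
Lemma setof_msk s : size s = n -> setof s = setof s. Proof. by []. Qed.

End Masks.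

Section Model.
Variable k : nat.
Local Notation n := k.+1.
Local Notation msk := (@msk k).
Local Notation setof := (@setof k).

Definition modeled (M : matroid 'I_n) (g : seq bool) (BL : seq (seq bool)) :=
  [/\ ground M = setof g, size g = n, all (fun s => size s == n) BL &
      forall B, (B \in bases M) = (msk B \in BL)].

Definition indep_m (BL : seq (seq bool)) (s : seq bool) := has (subl s) BL.
Definition rank_m (BL : seq (seq bool)) (a : seq bool) :=
  foldr maxn 0 [seq count id s | s <- allseqs n & subl s a && indep_m BL s].

Lemma indep_model M g BL I : modeled M g BL -> indep M I = indep_m BL (msk I).
Proof.
case=> _ _ /allP szBL Hb; apply/existsP/hasP => [[B /andP[Bin sIB]] | [s sin sub]].
  by exists (msk B); rewrite -?Hb // -subset_msk.
have sz : size s = n by apply/eqP/szBL.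
exists (setof s); rewrite Hb mskK // sin /=.
by rewrite subset_msk mskK.
Qed.

Lemma rank_model M g BL A : modeled M g BL -> rank M A = rank_m BL (msk A).
Proof.
move=> Mm; apply/eqP; rewrite eqn_leq; apply/andP; split.
  apply/bigmax_leqP => I /andP[sIA iI]; rewrite card_msk; apply: foldr_max_ge.
  apply: map_f; rewrite mem_filter msk_in_all andbT -subset_msk sIA /=.
  by rewrite -(indep_model _ Mm).
apply: foldr_max_le => x /mapP [s]; rewrite mem_filter mem_allseqs => /andP[/andP[sA iS] /eqP sz] ->.
have -> : count id s = #|setof s| by rewrite card_msk mskK.
rewrite /rank; apply: leq_bigmax_cond.
by rewrite subset_msk mskK // sA (indep_model _ Mm) mskK.
Qed.

Definition rk_tab (BL : seq (seq bool)) : seq nat := map (rank_m BL) (allseqs n).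
Definition rk_look (T : seq nat) (s : seq bool) := nth 0 T (index s (allseqs n)).
Lemma rk_lookE BL s : size s = n -> rk_look (rk_tab BL) s = rank_m BL s.
Proof.
move=> sz; rewrite /rk_look /rk_tab (nth_map [::]) ?nth_index ?index_mem //;
by rewrite mem_allseqs sz.
Qed.

Definition maxl (L : seq (seq bool)) := [seq s <- L | all (fun t => subl s t ==> (t == s)) L].

Definition minor_g (g c d : seq bool) := andl g (negl (orl c d)).
Definition minor_BL (rk : seq bool -> nat) (g c d : seq bool) :=
  let e' := minor_g g c d in
  let rc := rk c in
  maxl [seq s <- allseqs n | if subl s e' then rk (orl s c) == count id s + rc else false].

Lemma minor_model M g BL rk c d :
  modeled M g BL -> (forall A, rank M A = rk (msk A)) -> size c = n -> size d = n ->
  modeled (minor M (setof c) (setof d)) (minor_g g c d) (minor_BL rk g c d).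
Proof.
move=> Mm; have [gM szg _ _] := Mm => rkM szc szd.
have e'E : ground M :\: (setof c :|: setof d) = setof (minor_g g c d).
  by rewrite -[LHS]setofK msk_setD msk_setU gM !mskK.
have szm : size (minor_g g c d) = n.
  by rewrite /minor_g size_andl szg // size_negl size_orl ?szc ?szd.
split => //.
- apply/allP => s; rewrite /minor_BL /maxl !mem_filter mem_allseqs.
  by case/andP => _ /andP[_ ->].
move=> B; rewrite /minor /= inE.
set P := fun I : {set 'I_n} => _.
set p := fun s => if subl s (minor_g g c d) then rk (orl s c) == count id s + rk c else false.
have PE : forall I, P I = p (msk I).
  move=> I; rewrite /P /p e'E subset_msk mskK // !rkM msk_setU mskK //.
  by rewrite card_msk.
rewrite /minor_BL /maxl -/p mem_filter mem_filter msk_in_all andbT andbC.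
apply/maxsetP/andP => [[PB Hmax] | [pB /allP Hall]].
  split; first by rewrite -PE.
  apply/allP => t; rewrite mem_filter mem_allseqs => /andP[pt /eqP szt].
  apply/implyP => sBt; rewrite -(mskK szt) -eq_msk; apply/eqP.
  by apply: Hmax; rewrite ?PE ?mskK // subset_msk mskK.
split; first by rewrite PE.
move=> B' PB' sBB'; apply/eqP; rewrite eq_msk.
have := Hall (msk B'); rewrite mem_filter msk_in_all -PE PB' /=.
by move/(_ isT)/implyP; apply; rewrite -subset_msk.
Qed.

Definition circuit_m (g : seq bool) (BL : seq (seq bool)) (x : seq bool) :=
  let p := fun y => subl y g && ~~ indep_m BL y in
  p x && all (fun y => p y ==> subl y x ==> (y == x)) (allseqs n).

Lemma circuit_model M g BL X : modeled M g BL ->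
  circuit_m g BL (msk X) -> is_circuit M X.
Proof.
move=> Mm; have [gM szg _ _] := Mm.
have PE : forall Y : {set 'I_n}, (Y \subset ground M) && ~~ indep M Y =
   subl (msk Y) g && ~~ indep_m BL (msk Y).
  by move=> Y; rewrite gM subset_msk mskK // (indep_model _ Mm).
case/andP => pX /allP Hall; apply/minsetP; split; first by rewrite PE.
move=> Y PY sYX; apply/eqP; rewrite eq_msk.
have := Hall (msk Y) (msk_in_all Y); rewrite -PE PY /=.
by move/implyP; apply; rewrite -subset_msk.
Qed.

Definition hyper_m (g : seq bool) (BL : seq (seq bool)) (x : seq bool) :=
  let rx := rank_m BL x in
  subl x g &&
  all (fun i => (nth false g i && ~~ nth false x i) ==> (rx < rank_m BL (orl (unitl n i) x)))
    (iota 0 n) && (rx + 1 == rank_m BL g).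

Lemma hyper_model M g BL X : modeled M g BL ->
  hyper_m g BL (msk X) -> is_hyperplane M X.
Proof.
move=> Mm; have [gM szg _ _] := Mm.
case/andP => /andP[sXg /allP Hall] Hr.
apply/andP; split; last by rewrite !(rank_model _ Mm) gM mskK.
apply/andP; split; first by rewrite gM subset_msk mskK.
apply/forallP => e; apply/implyP; rewrite gM inE inE => /andP[eX eg].
rewrite !(rank_model _ Mm) msk_setU msk_set1.
have := Hall e; rewrite mem_iota ltn_ord /= => /(_ isT)/implyP; apply.
by rewrite nth_msk eX andbT.
Qed.

Definition exch_m (g : seq bool) (BL : seq (seq bool)) :=
  all (fun b => subl b g) BL && (BL != [::]) &&
  all (fun b1 => all (fun b2 => all (fun i =>
      (nth false b1 i && ~~ nth false b2 i) ==>
      has (fun j => nth false b2 j && ~~ nth false b1 j &&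
            (orl (andl b1 (negl (unitl n i))) (unitl n j) \in BL)) (iota 0 n))
     (iota 0 n)) BL) BL.

Lemma exch_model M g BL : modeled M g BL -> exch_m g BL -> is_matroid M.
Proof.
move=> Mm; have [gM szg /allP szBL Hb] := Mm.
case/andP => /andP[/allP Hsub BLne] /allP Hex; split.
- move=> B; rewrite Hb gM subset_msk mskK // => Bin; exact: Hsub.
- case: BL BLne szBL Hb {Hsub Hex Mm} => [|s BL] // _ szBL Hb.
  apply/set0Pn; exists (setof s); rewrite Hb mskK ?mem_head //.
  by apply/eqP/szBL/mem_head.
- move=> B1 B2 x; rewrite !Hb => B1in B2in; rewrite inE => /andP[xB2 xB1].
  have xi : (x : nat) \in iota 0 n by rewrite mem_iota ltn_ord.
  have := Hex _ B1in => /allP /(_ _ B2in) /allP /(_ _ xi).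
  rewrite !nth_msk xB1 xB2 implyTb => /hasP [j]; rewrite mem_iota add0n => /andP[_ jn].
  have -> : j = Ordinal jn by []; rewrite !nth_msk => /andP[/andP[jB2 jB1] jin].
  exists (Ordinal jn); first by rewrite inE jB2 jB1.
  by rewrite Hb msk_setU setDE msk_setI msk_setC !msk_set1.
Qed.

End Model.

Import GRing.Theory.
Local Open Scope ring_scope.

Lemma F2_cases (a : 'F_2) : a = 0 \/ a = 1.
Proof. case: a => [[|[|m]]] //= H; [left|right]; exact/val_inj. Qed.
Lemma F2_11 : (1 + 1 = 0 :> 'F_2). Proof. exact/val_inj. Qed.
Lemma F2_10 : (1 != 0 :> 'F_2). Proof. exact: oner_neq0. Qed.
Lemma F2_bool (a : 'F_2) : ((a == 1)%:R = a).
Proof. by case: (F2_cases a) => ->; rewrite ?eqxx // eq_sym (negbTE F2_10). Qed.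
Lemma F2_natb (b : bool) : (((b%:R : 'F_2)) == 1) = b.
Proof. by case: b => //=; rewrite eq_sym (negbTE F2_10). Qed.
Lemma F2_addb (a b : bool) : ((addb a b)%:R = a%:R + b%:R :> 'F_2).
Proof. by case: a; case: b; rewrite /= ?addr0 ?add0r ?F2_11. Qed.

Section F2.
Variable r : nat.

Definition vec (s : seq bool) : 'rV['F_2]_r := \row_(j < r) ((nth false s j)%:R).

Lemma vec_xor s t : size s = size t -> vec (xorl s t) = vec s + vec t.
Proof. by move=> e; apply/rowP => j; rewrite !mxE nth_xorl // F2_addb. Qed.
Lemma vec_inj s t : size s = r -> size t = r -> vec s = vec t -> s = t.
Proof.
move=> ss st e; apply: (eq_from_nth (x0 := false)); first by rewrite ss st.
move=> i; rewrite ss => lt; have := congr1 (fun x : 'rV['F_2]_r => x 0 (Ordinal lt)) e.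
by rewrite !mxE /= => /(congr1 (fun x => x == 1)); rewrite !F2_natb.
Qed.
Lemma vec0 : vec (nseq r false) = 0.
Proof. by apply/rowP => j; rewrite !mxE nth_nseq if_same. Qed.

Fixpoint xst (L : seq (seq bool)) : nat * seq (seq bool) :=
  match L with
  | [::] => (0%N, [:: nseq r false])
  | u :: L' => let (k0, sp) := xst L' in
      if u \in sp then (k0, sp) else (k0.+1, sp ++ map (xorl u) sp)
  end.
Definition xrank L := (xst L).1.

Lemma xst_spec L : all (fun u => size u == r) L ->
  [/\ (xst L).1 = \rank (\sum_(u <- L) <<vec u>>)%MS,
      all (fun w => size w == r) (xst L).2 &
      forall x : 'rV['F_2]_r, (x <= \sum_(u <- L) <<vec u>>)%MS <->
           exists2 w, w \in (xst L).2 & x = vec w].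
Proof.
elim: L => [|u L IH] /=.
  rewrite big_nil mxrank0 size_nseq eqxx; split => // x.
  rewrite submx0; split => [/eqP ->|[w]]; first by exists (nseq r false); rewrite ?mem_head ?vec0.
  by rewrite inE => /eqP -> ->; rewrite vec0.
case/andP => /eqP szu /IH {IH}.
case: (xst L) => k0 sp /= [Hk /allP Hsz Hmem].
rewrite big_cons; set S := (\sum_(u <- L) <<vec u>>)%MS.
have szsp : forall w, w \in sp -> size w = r by move=> w /Hsz /eqP.
case: ifP => usp.
  have sS : (<<vec u>> <= S)%MS by rewrite genmxE; apply/Hmem; exists u.
  rewrite (addsmx_idPr sS) -Hk; split => //; first by apply/allP.
  move=> x; rewrite (addsmx_idPr sS); exact: Hmem.
have nS : ~~ (vec u <= S)%MS.
  apply/negP => /Hmem [w win e]; move: usp; rewrite (vec_inj szu (szsp _ win) e) win //.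
have eqa : (<<vec u>> + S :=: vec u + S)%MS := adds_eqmx (genmxE _) (eqmx_refl _).
split.
- apply/eqP; rewrite eqn_leq; apply/andP; split.
    have sSa : (S <= <<vec u>> + S)%MS by exact: addsmxSr.
    have := mxrank_leqif_sup sSa; case=> le eqc.
    rewrite Hk ltn_neqAle le andbT; apply/negP => /eqP e.
    have sub : (<<vec u>> + S <= S)%MS by rewrite -eqc -/S e eqxx.
    case/negP: nS.
    by apply: submx_trans sub; rewrite -genmxE addsmxSl.
  apply: leq_trans (mxrank_adds_leqif _ _).1 _.
  rewrite mxrank_gen; apply: leq_trans (leq_add (rank_leq_row (vec u)) (leqnn (\rank S))) _.
  by rewrite add1n Hk.
- apply/allP => w; rewrite mem_cat => /orP [/Hsz // | /mapP [w' w'in ->]].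
  by rewrite size_xorl szu ?szsp.
- move=> x; rewrite eqa; split.
    case/sub_addsmxP => [[c z]] /= ->.
    rewrite [c]mx11_scalar mul_scalar_mx.
    have /Hmem [w win ew] : (z *m S <= S)%MS by exact: submxMl.
    case: (F2_cases (c 0 0)) => ->; rewrite ?scale0r ?scale1r ?add0r.
      by exists w; rewrite // mem_cat win.
    exists (xorl u w); last by rewrite vec_xor ?ew // szu szsp.
    by rewrite mem_cat; apply/orP; right; apply: map_f.
  case=> w; rewrite mem_cat => /orP[win ->|/mapP[w' w'in ->] ->].
    by apply: submx_trans (addsmxSr _ _); apply/Hmem; exists w.
  rewrite vec_xor ?szu ?szsp //; apply: addmx_sub; first exact: addsmxSl.
  by apply: submx_trans (addsmxSr _ _); apply/Hmem; exists w'.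
Qed.

Lemma xrankE L : all (fun u => size u == r) L -> xrank L = \rank (\sum_(u <- L) <<vec u>>)%MS.
Proof. by case/xst_spec. Qed.

Section Codes.
Variable k : nat.
Local Notation n := k.+1.

Definition codes_of (cds : seq (seq bool)) (s : seq bool) :=
  [seq nth [::] cds i | i <- iota 0 n & nth false s i].

Lemma span_codes cds (S : {set 'I_n}) : size cds = n -> all (fun c => size c == r) cds ->
  span_rank (fun e : 'I_n => vec (nth [::] cds e)) S = xrank (codes_of cds (msk S)).
Proof.
move=> szc /allP Hc; rewrite xrankE; last first.
  apply/allP => u /mapP [i]; rewrite mem_filter mem_iota => /andP[_ /andP[_ lt]] ->.
  by apply: Hc; rewrite mem_nth // szc.
rewrite /span_rank /codes_of big_map big_filter.
rewrite (eq_bigl (fun e : 'I_n => nth false (msk S) e)); last by move=> e; rewrite nth_msk.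
rewrite -(big_mkord (fun i => nth false (msk S) i) (fun i => <<vec (nth [::] cds i)>>)%MS).
by rewrite /index_iota subn0.
Qed.
End Codes.
End F2.

Close Scope ring_scope.

Section Check.
Variable k : nat.
Local Notation n := k.+1.
Local Notation msk := (@msk k).
Local Notation setof := (@setof k).

Definition blist (b0 : seq bool) := [seq i <- iota 0 n | nth false b0 i].

Definition fund_codes (g : seq bool) (BL : seq (seq bool)) (b0 : seq bool) :=
  let bl := blist b0 in let r := size bl in
  [seq (if nth false b0 i then unitl r (index i bl)
        else if nth false g i then
          [seq (orl (andl b0 (negl (unitl n (nth 0%N bl j)))) (unitl n i) \in BL) | j <- iota 0 r]
        else nseq r false) | i <- iota 0 n].

Definition binpred r (cds : seq (seq bool)) (g s : seq bool) :=
  let x := xrank r (codes_of k cds s) in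
  subl s g && (x == count id s) && (x == xrank r (codes_of k cds g)).

Definition bin_check_with r cds (g : seq bool) (BL : seq (seq bool)) :=
  (size cds == n) && all (fun c => size c == r) cds &&
  all (fun s => (s \in BL) == binpred r cds g s) (allseqs n).

Definition bin_check (g : seq bool) (BL : seq (seq bool)) :=
  if BL is b0 :: _ then bin_check_with (size (blist b0)) (fund_codes g BL b0) g BL else false.

Lemma bin_with_sound (M : matroid 'I_n) g BL r cds : modeled M g BL -> bin_check_with r cds g BL -> binary M.
Proof.
case=> gM szg _ Hb /andP[/andP[/eqP szc Hc] /allP Hall].
exists r, (fun e : 'I_n => vec r (nth [::] cds e)); apply/setP => B.
rewrite inE Hb gM subset_msk mskK // !span_codes // mskK // card_msk.
by apply/eqP/Hall/msk_in_all.
Qed.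

Lemma bin_sound (M : matroid 'I_n) g BL : modeled M g BL -> bin_check g BL -> binary M.
Proof. by case: BL => [|b0 BL] // Mm; apply: bin_with_sound Mm. Qed.

Definition inR_check (g : seq bool) (BL : seq (seq bool)) :=
  if bin_check g BL then true else
  has (fun h => let BLN := filter (predC1 h) BL in
        if bin_check g BLN then (if circuit_m k g BLN h then hyper_m k g BLN h else false)
        else false) BL.

Lemma inR_sound (M : matroid 'I_n) g BL : modeled M g BL -> inR_check g BL -> in_R M.
Proof.
move=> Mm; rewrite /inR_check; case: ifP => [/(bin_sound Mm) bM _ | _]; first by left.
case/hasP => h hin; case: ifP => // bc; case: ifP => // cc hc.
have [gM szg /allP szBL Hb] := Mm.
have szh : size h = n by apply/eqP/szBL.
pose N := Matroid (setof g) [set B | msk B \in filter (predC1 h) BL].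
have Nm : modeled N g (filter (predC1 h) BL).
  split => //; last by move=> B; rewrite inE.
  by apply/allP => s; rewrite mem_filter => /andP[_ /szBL].
right; exists N, (setof h); split.
- exact: bin_sound Nm bc.
- by apply: circuit_model Nm _; rewrite mskK.
- by apply: hyper_model Nm _; rewrite mskK.
case: M Mm gM Hb => gr bs Mm /= gM Hb; rewrite /relax /= gM; congr Matroid.
apply/setP => B; rewrite Hb !inE mem_filter /= eq_msk mskK //.
by case: eqP => // ->.
Qed.

Definition cond (g c d : seq bool) :=
  subl (orl c d) g && (andl c d == nseq n false) && (orl c d != nseq n false).

Definition minors_check (g : seq bool) (BL : seq (seq bool)) :=
  let T := rk_tab k BL in
  all (fun c => all (fun d => if cond g c d then
     inR_check (minor_g g c d) (minor_BL k (rk_look k T) g c d) else true) (allseqs n)) (allseqs n).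

Lemma minors_sound (M : matroid 'I_n) g BL : modeled M g BL -> minors_check g BL ->
  forall C D : {set 'I_n}, C :|: D \subset ground M -> [disjoint C & D] ->
        C :|: D != set0 -> in_R (minor M C D).
Proof.
move=> Mm; have [gM szg _ _] := Mm; move=> /allP H C D sub dis ne.
have cnd : cond g (msk C) (msk D).
  rewrite /cond -!msk_setU -msk_setI -msk_set0 -!eq_msk.
  by rewrite -(mskK szg) -subset_msk -gM sub setI_eq0 dis ne.
have := H _ (msk_in_all C) => /allP /(_ _ (msk_in_all D)); rewrite cnd => ok.
have rkM : forall A, rank M A = rk_look k (rk_tab k BL) (msk A).
  by move=> A; rewrite rk_lookE ?size_msk // (rank_model _ Mm).
have := inR_sound (minor_model Mm rkM (size_msk C) (size_msk D)) ok.
by rewrite !setofK.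
Qed.

End Check.

Import GRing.Theory.

Fixpoint lhas (T : Type) (a : T -> bool) (s : seq T) : bool :=
  match s with x :: s' => if a x then true else lhas a s' | [::] => false end.
Fixpoint lall (T : Type) (a : T -> bool) (s : seq T) : bool :=
  match s with x :: s' => if a x then lall a s' else false | [::] => true end.
Lemma lhasE T (a : T -> bool) s : lhas a s = has a s.
Proof. by elim: s => //= x s ->; case: (a x). Qed.
Lemma lallE T (a : T -> bool) s : lall a s = all a s.
Proof. by elim: s => //= x s ->; case: (a x). Qed.

Fixpoint prod_lists (L : seq (seq (seq bool))) : seq (seq (seq bool)) :=
  match L with
  | [::] => [:: [::]]
  | c :: L' => [seq x :: a | x <- c, a <- prod_lists L']
  end.

Lemma mem_prod_lists L cds : size cds = size L ->
  (forall i, i < size L -> nth [::] cds i \in nth [::] L i) -> cds \in prod_lists L.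
Proof.
elim: L cds => [|c L IH] [|x a] //= [sz] H.
apply: allpairs_f; first exact: (H 0).
by apply: IH => // i lt; apply: (H i.+1).
Qed.

Section Neg.
Variable k : nat.
Local Notation n := k.+1.
Local Notation msk := (@msk k).
Local Notation setof := (@setof k).

Definition cands (b0 : seq bool) r i :=
  if nth false b0 i then [:: unitl r (index i (blist k b0))] else allseqs r.

Definition neg_check (BLN : seq (seq bool)) :=
  if BLN is b0 :: _ then
    let r := size (blist k b0) in
    lall (fun cds => lhas (fun s => (s \in BLN) != binpred k r cds (nseq n true) s) (BLN ++ allseqs n))
      (prod_lists [seq cands b0 r i | i <- iota 0 n])
  else false.

Section Coord.
Variables (m : nat) (v : 'I_n -> 'rV['F_2]_m) (b0 : seq bool).
Hypothesis szb0 : size b0 = n.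
Let blo : seq 'I_n := filter (fun i : 'I_n => nth false b0 i) (enum 'I_n).
Lemma blist_val : map val blo = blist k b0.
Proof.
rewrite /blist; have -> : iota 0 n = map val (enum 'I_n) by rewrite val_enum_ord.
by rewrite filter_map.
Qed.
Local Notation r := (size (blist k b0)).
Lemma size_blo : size blo = r. Proof. by rewrite -blist_val size_map. Qed.
Lemma card_b0 : #|setof b0| = r.
Proof.
rewrite -size_blo cardE /enum_mem /blo -enumT; congr size; apply: eq_filter => i.
by rewrite /= inE.
Qed.

Hypothesis hB0 : span_rank v (setof b0) = r.
Hypothesis hT : span_rank v setT = r.

Definition Phi : 'M['F_2]_(r, m) := \matrix_(j < r) v (nth ord0 blo j).

Lemma Phi_rows (j : 'I_r) : row j Phi = v (nth ord0 blo j).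
Proof. by rewrite rowK. Qed.

Lemma Phi_eq : (Phi :=: \sum_(e in setof b0) <<v e>>)%MS.
Proof.
apply/eqmxP/andP; split.
  apply/row_subP => j; rewrite Phi_rows (sumsmx_sup (nth ord0 blo j)) ?genmxE //.
  have : nth ord0 blo j \in blo by rewrite mem_nth // size_blo.
  by rewrite mem_filter inE => /andP[].
apply/sumsmx_subP => e; rewrite inE => eb; rewrite genmxE.
have eblo : e \in blo by rewrite mem_filter eb mem_enum.
have lt : index e blo < r by rewrite -size_blo index_mem.
by rewrite -(nth_index ord0 eblo) -(Phi_rows (Ordinal lt)) row_sub.
Qed.

Lemma Phi_free : row_free Phi.
Proof. by rewrite /row_free Phi_eq; apply/eqP. Qed.

Lemma v_sub (e : 'I_n) : (v e <= Phi)%MS.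
Proof.
have s0T : ((\sum_(e in setof b0) <<v e>>) <= \sum_(e in [set: 'I_n]) <<v e>>)%MS.
  by apply/sumsmx_subP => i _; rewrite (sumsmx_sup i) ?inE.
have := mxrank_leqif_sup s0T; case=> _ eqc.
have sT0 : (\sum_(e in [set: 'I_n]) <<v e>> <= \sum_(e in setof b0) <<v e>>)%MS.
  by rewrite -eqc; apply/eqP; move: hB0 hT; rewrite /span_rank => -> ->.
rewrite Phi_eq; apply: submx_trans sT0; rewrite (sumsmx_sup e) ?inE ?genmxE //.
Qed.

Definition xco (e : 'I_n) : 'rV['F_2]_r := odflt 0%R [pick x : 'rV_r | v e == (x *m Phi)%R].
Lemma xcoE e : v e = (xco e *m Phi)%R.
Proof.
rewrite /xco; case: pickP => [x /eqP //|none].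
by have /submxP [x ex] := v_sub e; have := none x; rewrite ex eqxx.
Qed.

Definition code (e : 'I_n) : seq bool := [seq xco e ord0 j == 1%R | j <- enum 'I_r].
Lemma vec_code e : vec r (code e) = xco e.
Proof.
apply/rowP => j; rewrite mxE (nth_map j) ?size_enum_ord // nth_ord_enum.
by rewrite F2_bool.
Qed.
Lemma size_code e : size (code e) = r. Proof. by rewrite size_map size_enum_ord. Qed.

Definition cds : seq (seq bool) := [seq code i | i <- enum 'I_n].
Lemma nth_cds (i : 'I_n) : nth [::] cds i = code i.
Proof. by rewrite (nth_map ord0) ?size_enum_ord // nth_ord_enum. Qed.
Lemma size_cds : size cds = n. Proof. by rewrite size_map size_enum_ord. Qed.
Lemma all_cds : all (fun c => size c == r) cds.
Proof. by apply/allP => c /mapP [i _ ->]; rewrite size_code. Qed.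

Lemma span_cds S : span_rank v S = xrank r (codes_of k cds (msk S)).
Proof.
rewrite -span_codes ?size_cds ?all_cds //.
rewrite /span_rank.
rewrite (eq_bigr (fun e : 'I_n => <<(vec r (nth [::] cds e) *m Phi)%R>>)%MS); last first.
  by move=> e _; rewrite nth_cds vec_code -xcoE.
have E : (((\sum_(e in S) <<vec r (nth [::] cds e)>>)%MS *m Phi)%R :=:
          \sum_(e in S) <<(<<vec r (nth [::] cds e)>> *m Phi)%R>>)%MS := sumsmxMr_gen _ _ _.
rewrite (eq_bigr (fun e : 'I_n => <<(<<vec r (nth [::] cds e)>> *m Phi)%R>>)%MS); last first.
  by move=> e _; apply/genmxP; apply/eqmxP; apply: eqmxMr; exact: eqmx_sym (genmxE _).
by rewrite -E mxrankMfree ?Phi_free.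
Qed.

Lemma code_unit i : i < n -> nth false b0 i -> nth [::] cds i = unitl r (index i (blist k b0)).
Proof.
move=> lt bi; set io := Ordinal lt.
have ioin : io \in blo by rewrite mem_filter bi mem_enum.
have jlt : index io blo < r by rewrite -size_blo index_mem.
set j := Ordinal jlt.
have ej : xco io = delta_mx ord0 j.
  apply: (row_free_inj Phi_free); rewrite /= -xcoE -rowE Phi_rows /=.
  by rewrite nth_index.
have ij : index i (blist k b0) = index io blo.
  by rewrite -blist_val -[i]/(val io) (index_map val_inj).
rewrite ij -[index io blo]/(val j).
rewrite -[i]/(val io) nth_cds /code ej; apply: (eq_from_nth (x0 := false)).
  by rewrite size_map size_enum_ord size_unitl.
move=> t; rewrite size_map size_enum_ord => tlt.
rewrite (nth_map j) ?size_enum_ord // nth_unitl tlt.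
have -> : nth j (enum 'I_r) t = Ordinal tlt by apply/val_inj; rewrite /= nth_enum_ord.
by rewrite mxE eqxx /= F2_natb.
Qed.
End Coord.

Lemma neg_sound (N : matroid 'I_n) BLN : binary N -> ground N = setT ->
  all (fun s => size s == n) BLN -> (forall B, (B \in bases N) = (msk B \in BLN)) ->
  neg_check BLN -> False.
Proof.
case=> m [v Hbases] gN /allP szBL Hb.
case: BLN szBL Hb => [|b0 BL'] // szBL Hb; rewrite /neg_check.
have szb0 : size b0 = n by apply/eqP/szBL/mem_head.
have B0in : setof b0 \in bases N by rewrite Hb mskK ?mem_head.
move: (B0in); rewrite Hbases inE gN => /andP[/andP[_ /eqP h1] /eqP h2].
rewrite card_b0 // in h1; rewrite h1 in h2.
rewrite lallE => /allP /(_ (cds v b0)).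
have cin : cds v b0 \in prod_lists [seq cands b0 (size (blist k b0)) i | i <- iota 0 n].
  apply: mem_prod_lists; first by rewrite size_cds size_map size_iota.
  move=> i; rewrite size_map size_iota => lt.
  rewrite (nth_map 0) ?size_iota // nth_iota // add0n /cands.
  case: ifP => bi; first by rewrite (code_unit h1 (esym h2)) // mem_head.
  by have := nth_cds v b0 (Ordinal lt); rewrite /= => ->; rewrite mem_allseqs size_code.
move/(_ cin); rewrite lhasE => /hasP [s sin].
have szs : size s = n.
  move: sin; rewrite mem_cat mem_allseqs => /orP[/szBL /eqP //| /eqP //].
rewrite -(mskK szs) -Hb Hbases inE gN /binpred mskK //.
have -> : subl s (nseq n true) by rewrite -msk_setT -(mskK szs) -subset_msk subsetT.
by rewrite subsetT !(span_cds h1 (esym h2)) mskK // msk_setT card_msk mskK // eqxx.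
Qed.
End Neg.

Section Final.
Variable k : nat.
Local Notation n := k.+1.
Local Notation msk := (@msk k).
Local Notation setof := (@setof k).

Lemma setof_full : setof (nseq n true) = setT.
Proof. by apply/setP => i; rewrite !inE nth_nseq ltn_ord. Qed.

Lemma notR (M : matroid 'I_n) BL : modeled M (nseq n true) BL -> neg_check k BL ->
  all (fun h => neg_check k (filter (predC1 h) BL)) BL -> ~ in_R M.
Proof.
move=> Mm; have [gM _ /allP szBL Hb] := Mm; rewrite setof_full in gM.
move=> nc /allP hc [bM | [N [H [bN _ _ eM]]]].
  by apply: (neg_sound bM gM _ Hb nc); apply/allP.
have gN : ground N = setT by rewrite -gM eM.
have HM : H \in bases M by rewrite eM /= setU11.
have bNM : forall B, B \in bases N -> B \in bases M by move=> B BN; rewrite eM /= setU1r.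
case: (boolP (H \in bases N)) => HN.
  apply: (neg_sound bN gN _ _ nc); first by apply/allP.
  move=> B; rewrite -Hb; apply/idP/idP => [/bNM //|]; rewrite eM /= !inE.
  by case/orP => [/eqP ->|].
have hH : neg_check k (filter (predC1 (msk H)) BL) by apply: hc; rewrite -Hb.
apply: (neg_sound bN gN _ _ hH).
  by apply/allP => s; rewrite mem_filter => /andP[_ /szBL].
move=> B; rewrite mem_filter /= -Hb -eq_msk.
apply/idP/andP => [BN|[BH]]; first by split; [apply: contraNneq HN => <- | apply: bNM].
by rewrite eM /= !inE (negbTE BH).
Qed.

Definition full_check (BL : seq (seq bool)) :=
  [&& all (fun s => size s == n) BL, exch_m k (nseq n true) BL,
      neg_check k BL, all (fun h => neg_check k (filter (predC1 h) BL)) BL &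
      minors_check k (nseq n true) BL].

Lemma full_sound (M : matroid 'I_n) BL :
  ground M = setT -> (forall B, (B \in bases M) = (msk B \in BL)) ->
  full_check BL -> excluded_minor_R M.
Proof.
move=> gM Hb /and5P [sz ex nc hc mc].
have Mm : modeled M (nseq n true) BL by split; rewrite ?size_nseq ?setof_full.
split; first exact: exch_model Mm ex.
  exact: notR Mm nc hc.
exact: minors_sound Mm mc.
Qed.
End Final.

Definition BLU2 := [seq s <- allseqs 5 | count id s == 2].
Definition BLU3 := [seq s <- allseqs 5 | count id s == 3].
Definition Kpred (s : seq bool) :=
  all (fun i => all (fun j => nth false s i ==> nth false s j ==> (i != j) ==> (i %% 4 != j %% 4))
    (iota 0 7)) (iota 0 7).
Definition BLK := [seq s <- allseqs 7 | (count id s == 2) && Kpred s].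
Definition BLKs := map negl BLK.

Lemma U25_bases B : (B \in bases U25) = (msk B \in BLU2).
Proof. by rewrite /U25 /= inE /BLU2 mem_filter msk_in_all card_msk andbT. Qed.
Lemma U35_bases B : (B \in bases U35) = (msk B \in BLU3).
Proof. by rewrite /U35 /= inE /BLU3 mem_filter msk_in_all card_msk andbT. Qed.

Lemma K_bases B : (B \in bases K) = (msk B \in BLK).
Proof.
rewrite /K /= inE /BLK mem_filter msk_in_all card_msk andbT; congr (_ && _).
apply/forallP/allP => [H i | H x].
  rewrite mem_iota add0n => /andP[_ lt]; apply/allP => j; rewrite mem_iota add0n => /andP[_ ltj].
  have := H (Ordinal lt); have := nth_msk B (Ordinal lt); rewrite /= => -> /implyP Hi.
  apply/implyP => /Hi /forallP /(_ (Ordinal ltj)).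
  by have := nth_msk B (Ordinal ltj); rewrite /= => ->.
apply/implyP => xB; apply/forallP => y; apply/implyP => yB.
have := H x; rewrite mem_iota ltn_ord => /(_ isT) /allP /(_ y); rewrite mem_iota ltn_ord.
move/(_ isT); rewrite !nth_msk xB yB /=.
by [].
Qed.

Lemma negl_inv s : negl (negl s) = s.
Proof. by rewrite /negl -map_comp map_id_in // => b _ /=; rewrite negbK. Qed.

Lemma Ks_bases B : (B \in bases Kstar) = (msk B \in BLKs).
Proof.
rewrite /Kstar /dual /= /BLKs.
have -> : msk B \in map negl BLK = (negl (msk B) \in BLK).
  by rewrite -{1}(negl_inv (msk B)) (mem_map (can_inj negl_inv)).
rewrite -msk_setC -K_bases.
apply/imsetP/idP => [[B' B'in ->]|HB]; first by rewrite /K /= setTD setCK.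
by exists (~: B); rewrite // /K /= setTD setCK.
Qed.

Lemma chk_U25 : full_check 4 BLU2. Proof. by vm_compute. Qed.
Lemma chk_U35 : full_check 4 BLU3. Proof. by vm_compute. Qed.
Lemma chk_K : full_check 6 BLK. Proof. by vm_compute. Qed.
Lemma chk_Ks : full_check 6 BLKs. Proof. by vm_compute. Qed.

Theorem lemma2p10 :
  [/\ excluded_minor_R U25, excluded_minor_R U35,
      excluded_minor_R K & excluded_minor_R Kstar].
Proof.
split.
- exact: (@full_sound 4 U25 BLU2 (erefl _) U25_bases chk_U25).
- exact: (@full_sound 4 U35 BLU3 (erefl _) U35_bases chk_U35).
- exact: (@full_sound 6 K BLK (erefl _) K_bases chk_K).
- exact: (@full_sound 6 Kstar BLKs (erefl _) Ks_bases chk_Ks).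
Qed.
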